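(* Let $\rho = (\mathcal{V}, V, \mathbf{1}, \mathrm{var}, \mathrm{low}, \mathrm{high}, \mathrm{flip})$ be a COBDD with $\mathcal{V} = \mathcal{X} \,\dot\cup\, \mathcal{U}$, where $\mathcal X=\{x_1,\dots,x_n\}$ and $\mathcal U=\{u_1,\dots,u_r\}$, let $v \in V$ be a node, $b \in \mathbb{B}$ a boolean, and let $[\![ v, b]\!] = K(\mathbf{x}, \mathbf{u})$. Then the C function K output by Synthesize$(\rho, v, b)$ has worst case execution time $O(rn)$.
   Context: $\mathbb{B}=\{0,1\}$; $\exists y\, f := f|_{y=0}+f|_{y=1}$. A COBDD is a tuple $\rho = (\mathcal{V}, V, \mathbf{1}, \mathrm{var}, \mathrm{low}, \mathrm{high}, \mathrm{flip})$ with $\mathcal V$ a finite totally ordered set of boolean variables, $V$ a finite set of nodes, $\mathbf 1\in V$ the terminal node, $\mathrm{var}: V\setminus\{\mathbf 1\}\to\mathcal V$, $\mathrm{high},\mathrm{low}: V\setminus\{\mathbf 1\}\to V$, $\mathrm{flip}: V\setminus\{\mathbf 1\}\to\mathbb B$, with variables strictly increasing along edges $v\to\mathrm{high}(v)$, $v\to\mathrm{low}(v)$; COBDDs are assumed reduced. $\mathrm{height}(v)$ is the length of the longest path from $v$ to $\mathbf 1$. Semantics: $[\![ \mathbf 1, b]\!] := \bar b$ and, for internal $v$ with $\mathrm{var}(v)=y$, $[\![ v,b]\!] := y [\![ \mathrm{high}(v), b]\!] + \bar y [\![ \mathrm{low}(v), b\oplus \mathrm{flip}(v)]\!]$. Synthesize$(\rho,v,b)$: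 (1) for $i=1,\dots,r$ compute (via correct COBDD substitution/quantification operations) a node $v_i$ and bit $b_i$ with $[\![ v_i,b_i]\!] = \exists u_{i+1},\dots,u_r\, K(\mathbf x, [\![ v_1,b_1]\!],\dots,[\![ v_{i-1},b_{i-1}]\!], 1, u_{i+1},\dots,u_r)$; (2) emit C code ''int K_bits(int *x, int action) { int ret_b; switch(action) { case $i-1$: ret_b = $\bar b_i$; goto L_$v_i$; ... }'' followed by one labeled block per node $w$ reachable from some $v_i$ (each node translated once): ''L_$\mathbf 1$: return ret_b;'' for the terminal, and for internal $w$ with $\mathrm{var}(w)=x_j$, ''L_$w$: if (x[$j-1$] == 1) goto L_$\mathrm{high}(w)$; else {ret_b = !ret_b; goto L_$\mathrm{low}(w)$;}'' if $\mathrm{flip}(w)=1$, or ''... else goto L_$\mathrm{low}(w)$;'' if $\mathrm{flip}(w)=0$; then ''}'' and ''void K(int *x,int *u){int i; for(i=0;i<$r$;i++) u[i]=K_bits(x,i);}''. Execution time is counted in executed C statements. *)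

(* Defs.v *)
From HB Require Import structures.
From mathcomp Require Import all_boot all_order all_algebra.
Set Implicit Arguments. Unset Strict Implicit. Unset Printing Implicit Defensive.

(* Variables: V = X (+) U, X = {x_1..x_n} = inl 'I_n (x_{j+1} = inl j), *)
(* U = {u_1..u_r} = inr 'I_r (u_{k+1} = inr k).                         *)
(* The total order on V is an arbitrary one, given by an injective rank. *)
Definition cvar (n r : nat) := ('I_n + 'I_r)%type.

(* A (reduced) COBDD.  var/low/high/flip are only meaningful on nodes   *)
(* different from the terminal [one]; their value at [one] is ignored.  *)
Record cobdd (n r : nat) := COBDD {
  node : finType;
  one : node;
  var : node -> cvar n r;
  low : node -> node;
  high : node -> node;
  flip : node -> bool;
  vrank : cvar n r -> nat;
  vrank_inj : injective vrank;
  ordered_high : forall w, w != one -> high w != one ->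
    vrank (var w) < vrank (var (high w));
  ordered_low : forall w, w != one -> low w != one ->
    vrank (var w) < vrank (var (low w));
  reduced_redundant : forall w, w != one -> ~ (high w = low w /\ flip w = false);
  reduced_unique : forall w w', w != one -> w' != one ->
    var w = var w' -> high w = high w' -> low w = low w' -> flip w = flip w' ->
    w = w'
}.

Section Sem.
Variables (n r : nat) (rho : cobdd n r).

(* [[w, b]] evaluated at an assignment a : V -> B.  Fuel-based; since  *)
(* paths have length <= n + r (ordering), fuel (n + r).+1 is enough.    *)
Fixpoint eval_fuel (fuel : nat) (w : node rho) (b : bool)
    (a : cvar n r -> bool) : bool :=
  match fuel with
  | 0 => false
  | k.+1 =>
    if w == one rho then ~~ b
    else if a (var w) then eval_fuel k (high w) b a
    else eval_fuel k (low w) (b (+) flip w) a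
  end.

Definition sem (w : node rho) (b : bool) (a : cvar n r -> bool) : bool :=
  eval_fuel (n + r).+1 w b a.

(* Step (1) of Synthesize (0-indexed: i : 'I_r stands for u_{i+1}):   *)
(* [[v_i,b_i]] = exists u_{i+1..r}.                                    *)
(*     K(x, [[v_1,b_1]],..,[[v_{i-1},b_{i-1}]], 1, u_{i+1},..,u_r)      *)
(* with K(x,u) = [[v,b]].                                              *)
Definition synth_spec (v : node rho) (b : bool)
    (vs : 'I_r -> node rho) (bs : 'I_r -> bool) : Prop :=
  forall (i : 'I_r) (a : cvar n r -> bool),
    sem (vs i) (bs i) a =
    [exists w : {ffun 'I_r -> bool},
       sem v b (fun y => match y with
                         | inl j => a (inl j)
                         | inr k => if k < i then sem (vs k) (bs k) a
                                    else if k == i then true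
                                    else w k
                         end)].

(* A labelled block "L_w: ..." of K_bits. *)
Inductive block :=
| BReturn                                   (* L_1: return ret_b;                      *)
| BIf (j : nat) (hi : node rho) (fl : bool) (lo : node rho)
    (* L_w: if (x[j] == 1) goto L_hi;
            else {ret_b = !ret_b; goto L_lo;}   (if fl)
            else goto L_lo;                     (if ~~ fl)                               *)
| BGoto (w : node rho).                     (* L_w: goto L_w'; (never emitted for a
                                               correct run; see translate)            *)

Record kbits_prog := KBits {
  kb_case : nat -> option (bool * node rho);   (* case a: ret_b = c; goto L_w; *)
  kb_block : node rho -> option block          (* the block labelled L_w, if emitted *)
}.

Definition edge : rel (node rho) :=
  fun w w' => (w != one rho) && ((w' == high w) || (w' == low w)).

(* Translation of one node.  The paper only translates nodes labelled   *)
(* by x-variables; a u-labelled node (which cannot be reachable) is     *)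
(* conservatively translated to an infinite loop "L_w: goto L_w;".     *)
Definition translate (w : node rho) : block :=
  if w == one rho then BReturn
  else match var w with
       | inl j => BIf j (high w) (flip w) (low w)
       | inr _ => BGoto w
       end.

(* Step (2) of Synthesize: the emitted K_bits. *)
Definition synth_prog (vs : 'I_r -> node rho) (bs : 'I_r -> bool) : kbits_prog :=
  KBits (fun a => match @insub nat (fun k => k < r) 'I_r a with
                  | Some i => Some (~~ bs i, vs i)
                  | None => None
                  end)
        (fun w => if [exists i : 'I_r, connect edge (vs i) w]
                  then Some (translate w) else None).

(* Execution with a count of executed C statements.                    *)
(* Result: Some (return value, #statements), None = did not finish     *)
(* within the fuel / undefined behaviour (missing label, no case).      *)
Fixpoint run_blocks (p : kbits_prog) (x : nat -> int) (fuel : nat)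
    (w : node rho) (ret : bool) : option (bool * nat) :=
  match fuel with
  | 0 => None
  | f.+1 =>
    match kb_block p w with
    | None => None
    | Some BReturn => Some (ret, 1)                               (* return *)
    | Some (BIf j hi fl lo) =>
      if x j == Posz 1 then
        omap (fun rt => (rt.1, rt.2 + 2)) (run_blocks p x f hi ret) (* if; goto *)
      else if fl then
        omap (fun rt => (rt.1, rt.2 + 3)) (run_blocks p x f lo (~~ ret))
                                                        (* if; ret_b = !ret_b; goto *)
      else
        omap (fun rt => (rt.1, rt.2 + 2)) (run_blocks p x f lo ret) (* if; goto *)
    | Some (BGoto w') => omap (fun rt => (rt.1, rt.2 + 1)) (run_blocks p x f w' ret)
    end
  end.

(* int K_bits(int *x, int action) { int ret_b; switch(action) {...} ... } *)
(* statements: declaration, switch, case assignment, goto, then blocks. *)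
Definition run_kbits (p : kbits_prog) (x : nat -> int) (fuel : nat)
    (action : nat) : option (bool * nat) :=
  match kb_case p action with
  | None => None
  | Some (c, w) => omap (fun rt => (rt.1, rt.2 + 4)) (run_blocks p x fuel w c)
  end.

(* void K(int *x,int *u){int i; for(i=0;i<r;i++) u[i]=K_bits(x,i);}     *)
(* statements: declaration, init, and per iteration: test, assignment   *)
(* (incl. the call, plus the statements of K_bits), increment; final test. *)
Definition run_K_time (p : kbits_prog) (x : nat -> int) (fuel : nat) : option nat :=
  foldr (fun i acc => match run_kbits p x fuel i, acc with
                      | Some rt, Some t => Some (t + 3 + rt.2)
                      | _, _ => None
                      end)
        (Some 3) (iota 0 r).

End Sem.

(* Main.v *)
Require Import Defs.
From mathcomp Require Import all_boot all_order all_algebra.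
From mathcomp Require Import zify.
Set Implicit Arguments. Unset Strict Implicit.

Section Proofs.
Variables (n r : nat) (rho : cobdd n r).
Local Notation N := (node rho).
Local Notation one := (Defs.one rho).
Local Notation rk := (vrank rho).
Local Notation edgeR := (@edge _ _ rho).

Definition dd (w : N) : nat :=
  if w == one then 0 else #|[pred y : cvar n r | rk (var w) <= rk y]|.

Lemma card_lt (T : finType) (g : T -> nat) (t : T) y :
  g t < y -> #|[pred u | y <= g u]| < #|[pred u | g t <= g u]|.
Proof.
move=> lt; apply: proper_card; apply/properP; split.
  apply/subsetP => u; rewrite !inE => H; exact: leq_trans (ltnW lt) H.
by exists t; rewrite !inE ?leqnn // -ltnNge.
Qed.

Lemma child_rank w c : w != one -> (c = high w \/ c = low w) -> c != one ->
  rk (var w) < rk (var c).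
Proof.
by move=> Hw [->|->] Hc; [apply: ordered_high | apply: ordered_low].
Qed.

Lemma dd_child w c : w != one -> (c = high w \/ c = low w) -> dd c < dd w.
Proof.
move=> Hw Hc; rewrite /dd (negbTE Hw).
case: eqP => [_|/eqP Hc1].
  by apply/card_gt0P; exists (var w); rewrite inE.
exact: (card_lt (g := rk) (t := var w)) (child_rank Hw Hc Hc1).
Qed.

Lemma eval_fuel_eq k k' w b a : dd w < k -> dd w < k' ->
  eval_fuel k w b a = eval_fuel k' w b a.
Proof.
elim: k k' w b => // k IH [|k'] w b Hk Hk' //=.
case: ifP => // /negbT Hw.
have Hh := dd_child Hw (or_introl erefl).
have Hl := dd_child Hw (or_intror erefl).
case: (a (var w)); apply: IH; lia.
Qed.

Definition semr (w : N) b a := eval_fuel (dd w).+1 w b a.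

Lemma semE w b a : semr w b a =
  if w == one then ~~ b
  else if a (var w) then semr (high w) b a
  else semr (low w) (b (+) flip w) a.
Proof.
rewrite {1}/semr /=; case: ifP => // /negbT Hw.
have Hh := dd_child Hw (or_introl erefl).
have Hl := dd_child Hw (or_intror erefl).
case: (a (var w)); apply: eval_fuel_eq; lia.
Qed.

Lemma sem_semr w b a : sem w b a = semr w b a.
Proof.
apply: eval_fuel_eq => //.
have : dd w <= n + r.
  rewrite /dd; case: ifP => // _.
  apply: leq_trans (max_card _) _; by rewrite card_sum !card_ord.
lia.
Qed.

Lemma node_ind (P : N -> Prop) :
  (forall w, (w != one -> P (high w) /\ P (low w)) -> P w) -> forall w, P w.
Proof.
move=> H w; have [k] := ubnP (dd w); elim: k w => // k IH w lt.
apply: H => Hw; split; apply: IH.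
  exact: leq_trans (dd_child Hw (or_introl erefl)) _.
exact: leq_trans (dd_child Hw (or_intror erefl)) _.
Qed.

Lemma sem_local w b a a' :
  (forall y, w != one -> rk (var w) <= rk y -> a y = a' y) ->
  semr w b a = semr w b a'.
Proof.
elim/node_ind: w b => w IH b H.
rewrite !(semE w); case: ifP => // /negbT Hw.
have [IHh IHl] := IH Hw.
rewrite (H (var w) Hw (leqnn _)).
have Hc : forall c, (c = high w \/ c = low w) ->
    forall y, c != one -> rk (var c) <= rk y -> a y = a' y.
  move=> c Hc y Hc1 Hy; apply: H => //.
  exact: ltnW (leq_trans (child_rank Hw Hc Hc1) Hy).
case: (a' (var w)); [apply: IHh | apply: IHl]; apply: Hc; auto.
Qed.

Lemma sem_ext w b a a' : (forall y, a y = a' y) -> semr w b a = semr w b a'.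
Proof. by move=> H; apply: sem_local => y _ _. Qed.

Definition upd (a : cvar n r -> bool) y v := fun z => if z == y then v else a z.

Lemma upd_at a y v : upd a y v y = v.
Proof. by rewrite /upd eqxx. Qed.

Lemma child_irr w c y b a v : w != one -> (c = high w \/ c = low w) ->
  var w = y -> semr c b (upd a y v) = semr c b a.
Proof.
move=> Hw Hc Ey; apply: sem_local => z Hc1 Hz; rewrite /upd.
case: eqP => // Ez; exfalso.
have := child_rank Hw Hc Hc1; rewrite Ey -Ez; lia.
Qed.

Lemma no_indep_step (w : N) b : w != one ->
  (forall h l b1 b2, maxn (dd h) (dd l) < dd w ->
     (forall a, semr h b1 a = semr l b2 a) -> h = l /\ b1 = b2) ->
  (forall a, semr w b (upd a (var w) true) = semr w b (upd a (var w) false)) ->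
  False.
Proof.
move=> Hw IH Hind.
have E : forall a, semr (high w) b a = semr (low w) (b (+) flip w) a.
  move=> a; have := Hind a; rewrite !(semE w) (negbTE Hw) !upd_at.
  by rewrite (child_irr _ _ _ Hw (or_introl erefl)) //
             (child_irr _ _ _ Hw (or_intror erefl)).
have Hm : maxn (dd (high w)) (dd (low w)) < dd w.
  by rewrite gtn_max (dd_child Hw (or_introl erefl)) (dd_child Hw (or_intror erefl)).
have [Hhl Hb] := IH _ _ _ _ Hm E.
apply: (reduced_redundant Hw); split => //.
by move: Hb; case: (flip w) => //; case: (b).
Qed.

Lemma canon s : forall w w' b b', maxn (dd w) (dd w') < s ->
  (forall a, semr w b a = semr w' b' a) -> w = w' /\ b = b'.
Proof.
elim: s => // s IH w w' b b' Hs E.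
move: Hs; rewrite ltnS geq_max => /andP [Hws Hw's].
have IHw : forall h l b1 b2, maxn (dd h) (dd l) < dd w ->
     (forall a, semr h b1 a = semr l b2 a) -> h = l /\ b1 = b2.
  by move=> h l b1 b2 H; apply: IH; exact: leq_trans H Hws.
have IHw' : forall h l b1 b2, maxn (dd h) (dd l) < dd w' ->
     (forall a, semr h b1 a = semr l b2 a) -> h = l /\ b1 = b2.
  by move=> h l b1 b2 H; apply: IH; exact: leq_trans H Hw's.
case: (eqVneq w one) => [Ew|Hw]; case: (eqVneq w' one) => [Ew'|Hw'].
- subst; split => //; have := E (fun _ => false); rewrite !(semE one) eqxx.
  exact: negb_inj.
- exfalso; apply: (no_indep_step (b := b') Hw' IHw') => a.
  by rewrite -!E Ew !(semE one) eqxx.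
- exfalso; apply: (no_indep_step (b := b) Hw IHw) => a.
  by rewrite !E Ew' !(semE one) eqxx.
case: (ltngtP (rk (var w)) (rk (var w'))) => [lt|gt|eq].
- exfalso; apply: (no_indep_step (b := b) Hw IHw) => a.
  rewrite !E; apply: sem_local => z _ Hz; rewrite /upd.
  case: eqP => // Ez; exfalso; move: lt; rewrite -Ez; lia.
- exfalso; apply: (no_indep_step (b := b') Hw' IHw') => a.
  rewrite -!E; apply: sem_local => z _ Hz; rewrite /upd.
  case: eqP => // Ez; exfalso; move: gt; rewrite -Ez; lia.
have ev := vrank_inj eq.
have Eh : forall a, semr (high w) b a = semr (high w') b' a.
  move=> a; have := E (upd a (var w) true); rewrite (semE w) (semE w') (negbTE Hw) (negbTE Hw').
  rewrite -ev !upd_at (child_irr _ _ _ Hw (or_introl erefl)) //.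
  by rewrite (child_irr _ _ _ Hw' (or_introl erefl)).
have El : forall a, semr (low w) (b (+) flip w) a = semr (low w') (b' (+) flip w') a.
  move=> a; have := E (upd a (var w) false); rewrite (semE w) (semE w') (negbTE Hw) (negbTE Hw').
  rewrite -ev !upd_at /= (child_irr _ _ _ Hw (or_intror erefl)) //.
  by rewrite (child_irr _ _ _ Hw' (or_intror erefl)).
have Hh1 := dd_child Hw (or_introl erefl).
have Hh2 := dd_child Hw' (or_introl erefl).
have Hl1 := dd_child Hw (or_intror erefl).
have Hl2 := dd_child Hw' (or_intror erefl).
have [eh eb] := IH (high w) (high w') b b' (ltac:(rewrite gtn_max; apply/andP; split; lia)) Eh.
have [el ef] := IH (low w) (low w') (b (+) flip w) (b' (+) flip w') (ltac:(rewrite gtn_max; apply/andP; split; lia)) El.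
subst b'; split => //.
apply: reduced_unique => //.
by move: ef; case: (flip w); case: (flip w'); case: (b).
Qed.

Lemma rank_path p c : path edgeR c p -> last c p != one ->
  c != one /\ rk (var c) <= rk (var (last c p)).
Proof.
elim: p c => [|c' p IH] c /=; first by move=> _ H; split.
case/andP => Hedge Hp Hl.
have [Hc' Hr] := IH c' Hp Hl.
move: Hedge; rewrite /edge => /andP [Hc Hor]; split => //.
have Hch : c' = high c \/ c' = low c by case/orP: Hor => /eqP; auto.
have := child_rank Hc Hch Hc'; lia.
Qed.

Lemma indep_path p w b : path edgeR w p -> last w p != one ->
  (forall a v, semr w b (upd a (var (last w p)) v) = semr w b a) -> False.
Proof.
elim: p w b => [|c p IH] w b /=.
  move=> _ Hw H; apply: (no_indep_step (b := b) Hw).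
    by move=> h l b1 b2 _ E; apply: (canon (s := (maxn (dd h) (dd l)).+1)).
  by move=> a; rewrite !H.
case/andP => Hedge Hp Hl H.
have [Hc Hr] := rank_path Hp Hl.
move: Hedge; rewrite /edge => /andP [Hw Hor].
set y := var (last c p) in H Hr.
have Hch : c = high w \/ c = low w by case/orP: Hor => /eqP; auto.
have Hwy : rk (var w) < rk y by have := child_rank Hw Hch Hc; lia.
have Hneq : forall z, z == y -> (z == var w) = false.
  move=> z /eqP ->; apply/eqP => E; move: Hwy; rewrite E; lia.
have comm : forall a v v', semr w b (upd (upd a y v) (var w) v') =
                           semr w b (upd (upd a (var w) v') y v).
  move=> a v v'; apply: sem_ext => z; rewrite /upd.
  case: ifP => Hz1; case: ifP => Hz2 //.
  by rewrite Hneq in Hz1.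
case: Hch => Ec; subst c.
- apply: (IH (high w) b Hp Hl) => a v.
  have K : forall a, semr (high w) b a = semr w b (upd a (var w) true).
    by move=> a'; rewrite (semE w) (negbTE Hw) upd_at
         (child_irr _ _ _ Hw (or_introl erefl)).
  by rewrite !K comm H.
- apply: (IH (low w) (b (+) flip w) Hp Hl) => a v.
  have K : forall a, semr (low w) (b (+) flip w) a = semr w b (upd a (var w) false).
    by move=> a'; rewrite (semE w) (negbTE Hw) upd_at /=
         (child_irr _ _ _ Hw (or_intror erefl)).
  by rewrite !K comm H.
Qed.

Variables (v : N) (b : bool) (vs : 'I_r -> N) (bs : 'I_r -> bool).
Hypothesis S : synth_spec v b vs bs.

Lemma spec_indep i a a' : (forall j, a (inl j) = a' (inl j)) ->
  sem (vs i) (bs i) a = sem (vs i) (bs i) a'.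
Proof.
suff H : forall m (i : 'I_r), i < m -> forall a a',
   (forall j, a (inl j) = a' (inl j)) ->
   sem (vs i) (bs i) a = sem (vs i) (bs i) a' by apply: (H i.+1).
elim=> // m IHm i' lt a1 a2 Ha.
rewrite !S; apply: eq_existsb => w.
rewrite !sem_semr; apply: sem_ext => -[j|k] /=; first exact: Ha.
case: ifP => kl //; apply: IHm => //; move: kl lt; clear; lia.
Qed.

Lemma reach_inl i w : connect edgeR (vs i) w -> w != one -> exists j, var w = inl j.
Proof.
move=> Hc Hw; case E: (var w) => [j|k]; first by exists j.
exfalso; case/connectP: Hc => p Hp Hl; subst w.
apply: (indep_path (b := bs i) Hp Hw) => a vv.
rewrite -!sem_semr; apply: spec_indep => j.
by rewrite /upd E.
Qed.

Definition mm (w : N) : nat :=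
  if w == one then 0 else #|[pred j : 'I_n | rk (var w) <= rk (inl j)]|.

Lemma mm_child w j0 c : w != one -> var w = inl j0 ->
  (c = high w \/ c = low w) -> mm c < mm w.
Proof.
move=> Hw Ej Hc; rewrite /mm (negbTE Hw).
case: eqP => [_|/eqP Hc1].
  by apply/card_gt0P; exists j0; rewrite inE Ej.
have := child_rank Hw Hc Hc1; rewrite Ej => lt.
exact: (card_lt (g := fun j => rk (inl j)) (t := j0)) lt.
Qed.

Lemma mm_le w : mm w <= n.
Proof.
rewrite /mm; case: ifP => // _.
by apply: leq_trans (max_card _) _; rewrite card_ord.
Qed.

Lemma run_ok i x k w ret : connect edgeR (vs i) w -> mm w < k ->
  exists res t, run_blocks (synth_prog vs bs) x k w ret = Some (res, t) /\
                t <= 3 * mm w + 1.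
Proof.
elim: k w ret => // k IH w ret Hc Hk.
have Hex : [exists i0, connect edgeR (vs i0) w] by apply/existsP; exists i.
rewrite /= Hex /translate.
case: ifP => [_|/negbT Hw]; first by exists ret, 1; split => //; lia.
have [j Ej] := reach_inl Hc Hw.
rewrite Ej.
have Eh : edge w (high w) by rewrite /edge Hw eqxx.
have El : edge w (low w) by rewrite /edge Hw eqxx orbT.
have Mh := mm_child Hw Ej (or_introl erefl).
have Ml := mm_child Hw Ej (or_intror erefl).
case: ifP => _.
  have [res [t [Hr Ht]]] := IH (high w) ret (connect_trans Hc (connect1 Eh))
    (ltac:(lia)).
  by rewrite Hr /=; exists res, (t + 2); split => //; lia.
case: (flip w).
  have [res [t [Hr Ht]]] := IH (low w) (~~ ret) (connect_trans Hc (connect1 El))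
    (ltac:(lia)).
  by rewrite Hr /=; exists res, (t + 3); split => //; lia.
have [res [t [Hr Ht]]] := IH (low w) ret (connect_trans Hc (connect1 El))
  (ltac:(lia)).
by rewrite Hr /=; exists res, (t + 2); split => //; lia.
Qed.

Lemma kbits_ok x a : a < r ->
  exists rt, run_kbits (synth_prog vs bs) x n.+1 a = Some rt /\ rt.2 <= 3 * n + 5.
Proof.
move=> Ha; have Hc : kb_case (synth_prog vs bs) a = Some (~~ bs (Sub a Ha), vs (Sub a Ha)) by rewrite /= (insubT (fun k => k < r) Ha).
have [res [t [Hr Ht]]] := run_ok (i := Sub a Ha) x (k := n.+1) (~~ bs (Sub a Ha))
  (connect0 _ _) (ltac:(have := mm_le (vs (Sub a Ha)); lia)).
rewrite /run_kbits Hc Hr /=; exists (res, t + 4); split => //=.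
have := mm_le (vs (Sub a Ha)); lia.
Qed.

End Proofs.

Theorem corollary1 :
  exists c : nat,
  forall (n r : nat) (rho : cobdd n r) (v : node rho) (b : bool)
         (vs : 'I_r -> node rho) (bs : 'I_r -> bool),
    synth_spec v b vs bs ->
    forall x : nat -> int,
    exists fuel t,
      run_K_time (synth_prog vs bs) x fuel = Some t /\
      t <= c * (r.+1 * n.+1).
Proof.
exists 8 => n r rho v b vs bs S x.
suff H : forall s, all (fun i => i < r) s -> exists t,
  foldr (fun i acc => match run_kbits (synth_prog vs bs) x n.+1 i, acc with
                      | Some rt, Some t => Some (t + 3 + rt.2)
                      | _, _ => None
                      end) (Some 3) s = Some t /\ t <= 3 + size s * (3 * n + 8).
  have [t [Ht Hle]] := H (iota 0 r) (ltac:(by apply/allP => a; rewrite mem_iota)).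
  exists n.+1, t; split; first exact: Ht.
  move: Hle; rewrite size_iota; nia.
elim=> [|a s IH] /=; first by exists 3; split => //; lia.
case/andP => Ha Hs.
have [t [Ht Hle]] := IH Hs.
have [rt [Hrt Hrt2]] := kbits_ok S x Ha.
rewrite Hrt Ht; exists (t + 3 + rt.2); split => //; nia.
Qed.
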